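(* Let $n\ge 2$, let $d:L_n\to L_n$ be any map, and put $v=\frac{n-2}{n-1}$. Suppose $d(v)\le v$. Then $d$ is a $(\odot,\vee)$-derivation on $L_n$ if and only if both of the following hold: (1) $d(v^m)=v^{m-1}\odot d(v)$ for each $m\in\{1,2,\dots,n-1\}$ (where $v^0=1$ and $v^m=v\odot\cdots\odot v$ with $m$ factors); (2) $v\odot d(1)\le d(v)$.
   Context: An MV-algebra is an algebra $(A,\oplus,{}^*,0)$ of type $(2,1,0)$ satisfying: $x\oplus(y\oplus z)=(x\oplus y)\oplus z$, $x\oplus y=y\oplus x$, $x\oplus 0=x$, $x^{**}=x$, $x\oplus 0^*=0^*$, $(x^*\oplus y)^*\oplus y=(y^*\oplus x)^*\oplus x$. Put $1=0^*$ and $x\odot y=(x^*\oplus y^* )^*$. The natural order is $x\le y$ iff $x^*\oplus y=1$, with lattice operations $x\vee y=(x\odot y^* )\oplus y$, $x\wedge y=x\odot(x^*\oplus y)$. A $(\odot,\vee)$-derivation on $A$ is a map $d:A\to A$ with $d(x\odot y)=(d(x)\odot y)\vee(x\odot d(y))$ for all $x,y\in A$. $L_n=\{0,\frac1{n-1},\dots,\frac{n-2}{n-1},1\}$ with $x\oplus y=\min\{1,x+y\}$, $x^*=1-x$. *)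

(* Defs.v *)
From mathcomp Require Import all_boot.
Set Implicit Arguments. Unset Strict Implicit. Unset Printing Implicit Defensive.

(* The MV-chain L_n = {0, 1/(n-1), ..., (n-2)/(n-1), 1}.
   Encoding: the element i/(n-1) is represented by i : 'I_(n.-1).+1,
   i.e. by its numerator.  For n >= 2 this is a bijection. *)
Definition Ln (n : nat) := 'I_(n.-1).+1.

Definition Ln0 {n} : Ln n := ord0.
Definition Ln1 {n} : Ln n := ord_max.

Definition Loplus {n} (x y : Ln n) : Ln n := inord (minn (x + y) n.-1).
Definition Lstar {n} (x : Ln n) : Ln n := inord (n.-1 - x).

Definition Lodot {n} (x y : Ln n) : Ln n := Lstar (Loplus (Lstar x) (Lstar y)).
Definition Lle {n} (x y : Ln n) : Prop := Loplus (Lstar x) y = Ln1.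
Definition Ljoin {n} (x y : Ln n) : Ln n := Loplus (Lodot x (Lstar y)) y.

Definition Lv {n} : Ln n := inord n.-2.

Fixpoint Lpow {n} (x : Ln n) (m : nat) : Ln n :=
  match m with
  | 0 => Ln1
  | m'.+1 => Lodot x (Lpow x m')
  end.

Definition is_odot_join_derivation {n} (d : Ln n -> Ln n) : Prop :=
  forall x y : Ln n, d (Lodot x y) = Ljoin (Lodot (d x) y) (Lodot x (d y)).

(* Main.v *)
Require Import Defs.
From mathcomp Require Import all_boot.
From mathcomp Require Import zify.

Section Aux.
Variable n : nat.

Lemma LstarE (x : Ln n) : nat_of_ord (Lstar x) = n.-1 - x.
Proof. by rewrite /Lstar inordK // ltnS leq_subr. Qed.

Lemma LoplusE (x y : Ln n) : nat_of_ord (Loplus x y) = minn (x + y) n.-1.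
Proof. by rewrite /Loplus inordK // ltnS geq_minr. Qed.

Lemma LodotE (x y : Ln n) : nat_of_ord (Lodot x y) = x + y - n.-1.
Proof.
rewrite /Lodot LstarE LoplusE !LstarE.
have := ltn_ord x; have := ltn_ord y; lia.
Qed.

Lemma LjoinE (x y : Ln n) : nat_of_ord (Ljoin x y) = maxn x y.
Proof.
rewrite /Ljoin LoplusE LodotE LstarE.
have := ltn_ord x; have := ltn_ord y; lia.
Qed.

Lemma Ln1E : nat_of_ord (@Ln1 n) = n.-1.
Proof. by []. Qed.

Lemma LleE (x y : Ln n) : Lle x y <-> x <= y.
Proof.
rewrite /Lle; have := ltn_ord x; have := ltn_ord y => hy hx; split.
  move/(congr1 val) => /=; rewrite LoplusE LstarE ?Ln1E; lia.
move=> h; apply: val_inj; rewrite /= /= LoplusE LstarE; lia.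
Qed.

Lemma LvE : nat_of_ord (@Lv n) = n.-2.
Proof. rewrite /Lv inordK //; lia. Qed.

Lemma LpowE m : nat_of_ord (Lpow (@Lv n) m) = n.-1 - m.
Proof.
elim: m => [|m IH] /=; first by rewrite subn0.
rewrite LodotE IH LvE; lia.
Qed.

End Aux.

Theorem theorem3p10 (n : nat) (hn : 2 <= n) (d : Ln n -> Ln n) :
  Lle (d Lv) Lv ->
  (is_odot_join_derivation d <->
   ((forall m : nat, 1 <= m <= n - 1 ->
       d (Lpow Lv m) = Lodot (Lpow Lv m.-1) (d Lv))
    /\ Lle (Lodot Lv (d Ln1)) (d Lv))).
Proof.
have hv1 : Lodot Lv Ln1 = Lv :> Ln n.
  apply: val_inj => /=; rewrite LodotE LvE ?Ln1E; lia.
move=> /LleE; rewrite LvE => hdv; split.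
  move=> der; split.
    elim=> [//|m IH] /andP [_ hm].
    case: m IH hm => [|m] IH hm.
      rewrite /= hv1; apply: val_inj; rewrite /= LodotE ?Ln1E; have := ltn_ord (d Lv); lia.
    have {}IH := IH (ltac:(lia)).
    rewrite [Lpow Lv m.+2]/= der IH.
    apply: val_inj; rewrite /= LjoinE !LodotE !LpowE LvE /=.
    have := ltn_ord (d Lv); lia.
  apply/LleE; have := der Lv Ln1.
  move/(congr1 val) => /=; rewrite LjoinE !LodotE LvE ?Ln1E.
  have -> : Lodot Lv Ln1 = Lv :> Ln n.
    apply: val_inj; rewrite /= LodotE LvE ?Ln1E; lia.
  move=> ->; lia.
move=> [h1 /LleE h2].
rewrite LodotE LvE ?Ln1E in h2.
set a := nat_of_ord (d Lv) in hdv h2.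
have hd : forall z : Ln n, nat_of_ord z < n.-1 -> nat_of_ord (d z) = z.+1 + a - n.-1.
  move=> z hz.
  have hz' : Lpow Lv (n.-1 - z) = z.
    apply: val_inj; rewrite /= LpowE; have := ltn_ord z; lia.
  rewrite -{1}hz' h1; last by lia.
  rewrite LodotE LpowE; lia.
have cs : forall x : Ln n, nat_of_ord x < n.-1 \/ x = Ln1.
  move=> x; have := ltn_ord x; case: (ltnP (nat_of_ord x) n.-1) => h; first by left.
  by move=> h'; right; apply: val_inj; rewrite /= ?Ln1E; lia.
move=> x y; apply: val_inj; rewrite /= LjoinE !LodotE.
have hb := ltn_ord (d Ln1).
have hx0 := ltn_ord x; have hy0 := ltn_ord y; have hN1 : 1 <= n.-1 by lia.
case: (cs x) => [hx|->]; case: (cs y) => [hy|->].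
- rewrite hd; last by rewrite LodotE; lia.
  rewrite LodotE (hd x) // (hd y) //.
  clear hb h2; clearbody a; move: (nat_of_ord x) (nat_of_ord y) hx hy hx0 hy0 => X Y.
  move: (n.-1) hN1 hdv => N; lia.
- rewrite hd; last by rewrite LodotE ?Ln1E; lia.
  rewrite LodotE (hd x) // ?Ln1E.
  clearbody a; move: (nat_of_ord x) (nat_of_ord y) (nat_of_ord (d Ln1)) hx hb h2 hx0 hy0 => X Y B.
  move: (n.-1) hN1 hdv => N; lia.
- rewrite hd; last by rewrite LodotE ?Ln1E; lia.
  rewrite LodotE (hd y) // ?Ln1E.
  clearbody a; move: (nat_of_ord x) (nat_of_ord y) (nat_of_ord (d Ln1)) hy hb h2 hx0 hy0 => X Y B.
  move: (n.-1) hN1 hdv => N; lia.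
- have -> : Lodot Ln1 Ln1 = Ln1 :> Ln n.
    apply: val_inj; rewrite /= LodotE ?Ln1E; lia.
  rewrite ?Ln1E; lia.
Qed.
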